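(* Let $R$ be a commutative associative unital ring, $B$ an $R$-algebra, $\beta\in\mathrm{IBF}_R(B)$ and $S$ a commutative associative unital $R$-algebra. (a) Let $\nu\colon\mathbf{IBF}_R(B)\otimes_R S\to\mathbf{IBF}_S(B\otimes_R S)$ be the isomorphism $\overline{b_1\otimes b_2}\otimes s\mapsto s\,\overline{(b_1\otimes1)\otimes(b_2\otimes1)}$. Then, identifying $R\otimes_R S=S$, one has $(\bar\beta)_S=\overline{(\beta_S)}\circ\nu$. (b) Assume $B$ is finitely presented as an $R$-module and $S$ is flat over $R$. If $(B,\beta)$ satisfies the IBF-principle, then so does $(B\otimes_R S,\beta_S)$. The converse holds whenever $S$ is faithfully flat over $R$.
   Context: An $R$-algebra is an $R$-module with an $R$-bilinear product (no identities assumed). $\mathrm{IBF}_R(B)$ is the set of $R$-bilinear forms $\beta\colon B\times B\to R$ with $\beta(ab,c)=\beta(a,bc)=\beta(b,ca)$. $\mathbf{IBF}_R(B)$ is the quotient of $B\otimes_R B$ by the $R$-submodule spanned by all $ab\otimes c-a\otimes bc$ and $ab\otimes c-b\otimes ca$; $\overline{a\otimes b}$ is the class of $a\otimes b$. For $\beta\in\mathrm{IBF}_R(B)$, $\bar\beta\colon\mathbf{IBF}_R(B)\to R$ is the $R$-linear map $\overline{a\otimes b}\mapsto\beta(a,b)$, and $(\bar\beta)_S=\bar\beta\otimes\mathrm{Id}_S$. $\beta_S$ is the base change: the $S$-bilinear form on $B\otimes_R S$ with $\beta_S(a\otimes s,b\otimes s')=\beta(a,b)ss'$ (it is invariant), and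 $\overline{(\beta_S)}\colon\mathbf{IBF}_S(B\otimes_R S)\to S$ is its induced map. $(C,\gamma)$ satisfies the IBF-principle if $\bar\gamma$ is an isomorphism. *)

(* Defs.v *)
(* Tensor products and IBF-modules are given by explicit
   data characterised by their universal property / defining relations
   (they are unique up to unique isomorphism). *)
From HB Require Import structures.
From mathcomp Require Import all_boot all_order all_algebra.
Set Implicit Arguments. Unset Strict Implicit. Unset Printing Implicit Defensive.
Import GRing.Theory.
Local Open Scope ring_scope.

(* Restriction of scalars along a ring morphism phi : R -> S:
   an S-module T viewed as an R-module, r *: t := phi r *: t. *)
Definition restr (R S : pzRingType) (phi : {rmorphism R -> S})
  (T : lmodType S) : Type := T.
Section Restr.
Variables (R S : pzRingType) (phi : {rmorphism R -> S}) (T : lmodType S).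
HB.instance Definition _ := GRing.Zmodule.on (restr phi T).
Definition restr_scale (r : R) (t : restr phi T) : restr phi T := (phi r *: (t : T)).
Lemma restr_scaleA a b v :
  restr_scale a (restr_scale b v) = restr_scale (a * b) v.
Proof. by rewrite /restr_scale scalerA rmorphM. Qed.
Lemma restr_scale1 : left_id 1 restr_scale.
Proof. by move=> v; rewrite /restr_scale rmorph1 scale1r. Qed.
Lemma restr_scaleDr : right_distributive restr_scale +%R.
Proof. by move=> a u v; rewrite /restr_scale scalerDr. Qed.
Lemma restr_scaleDl v : {morph restr_scale^~ v : a b / a + b}.
Proof. by move=> a b; rewrite /restr_scale rmorphD scalerDl. Qed.
HB.instance Definition _ := GRing.Zmodule_isLmodule.Build R (restr phi T)
  restr_scaleA restr_scale1 restr_scaleDr restr_scaleDl.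
End Restr.

Section Defs.
Variable K : comPzRingType.

Definition bilin (M N V : lmodType K) (g : M -> N -> V) : Prop :=
  (forall m, linear (g m)) /\ (forall n, linear (g^~ n)).

Definition is_tensor_product (M N T : lmodType K) (t : M -> N -> T) : Prop :=
  bilin t /\
  forall (V : lmodType K) (g : M -> N -> V), bilin g ->
    (exists h : T -> V, linear h /\ forall m n, h (t m n) = g m n) /\
    (forall h1 h2 : T -> V, linear h1 -> linear h2 ->
       (forall m n, h1 (t m n) = h2 (t m n)) -> forall x, h1 x = h2 x).

Inductive span (V : lmodType K) (P : V -> Prop) : V -> Prop :=
  | span0 : span P 0
  | span_gen x : P x -> span P x
  | span_comb r x y : span P x -> span P y -> span P (r *: x + y).

Definition ibf_inv (C V : lmodType K) (mulC : C -> C -> C) (g : C -> C -> V) :=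
  forall a b c, g (mulC a b) c = g a (mulC b c) /\ g (mulC a b) c = g b (mulC c a).

Definition is_IBF_form (C : lmodType K) (mulC : C -> C -> C) (g : C -> C -> K^o) :=
  bilin g /\ ibf_inv mulC g.

(* (Q, q) is IBF_K(C) = (C (x)_K C) / span{ab(x)c - a(x)bc, ab(x)c - b(x)ca},
   where (TT, tt) is the tensor product C (x)_K C and q the quotient map
   (so the class of a (x) b is q (tt a b)). *)
Definition is_IBF_quot (C : lmodType K) (mulC : C -> C -> C)
    (TT : lmodType K) (tt : C -> C -> TT) (Q : lmodType K) (q : TT -> Q) :=
  is_tensor_product tt /\ linear q /\ (forall y, exists x, q x = y) /\
  forall x, q x = 0 <->
    span (fun z => exists a b c, z = tt (mulC a b) c - tt a (mulC b c) \/
                                 z = tt (mulC a b) c - tt b (mulC c a)) x.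

Definition fin_pres (M : lmodType K) : Prop :=
  exists n (p : 'rV[K]_n -> M), linear p /\ (forall y, exists x, p x = y) /\
    exists m (k : 'I_m -> 'rV[K]_n),
      forall x, p x = 0 <-> span (fun z => exists i, z = k i) x.

Definition flat (A : lmodType K) : Prop :=
  forall (M N : lmodType K) (f : M -> N), linear f -> injective f ->
  forall (TM : lmodType K) (tM : A -> M -> TM) (TN : lmodType K) (tN : A -> N -> TN),
    is_tensor_product tM -> is_tensor_product tN ->
  forall F : TM -> TN, linear F -> (forall a m, F (tM a m) = tN a (f m)) ->
    injective F.

Definition exact_at (M1 M2 M3 : lmodType K) (f : M1 -> M2) (g : M2 -> M3) :=
  forall y, g y = 0 <-> exists x, f x = y.

Definition faithfully_flat (A : lmodType K) : Prop :=
  forall (M1 M2 M3 : lmodType K) (f : M1 -> M2) (g : M2 -> M3),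
    linear f -> linear g ->
  forall (T1 T2 T3 : lmodType K) (t1 : A -> M1 -> T1) (t2 : A -> M2 -> T2)
         (t3 : A -> M3 -> T3),
    is_tensor_product t1 -> is_tensor_product t2 -> is_tensor_product t3 ->
  forall (F : T1 -> T2) (G : T2 -> T3), linear F -> linear G ->
    (forall a m, F (t1 a m) = t2 a (f m)) ->
    (forall a m, G (t2 a m) = t3 a (g m)) ->
    (exact_at f g <-> exact_at F G).

End Defs.

(* Main.v *)
Require Import Defs.
From HB Require Import structures.
From mathcomp Require Import all_boot all_order all_algebra.
From Stdlib Require Import ClassicalEpsilon FunctionalExtensionality PropExtensionality ProofIrrelevance.
Import GRing.Theory.
Local Open Scope ring_scope.

Module Aux.
Set Implicit Arguments. Unset Strict Implicit. Unset Printing Implicit Defensive.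

Section LinHelp.
Variables (K : pzRingType) (U V : lmodType K) (f : U -> V) (Hf : linear f).
Lemma linD u v : f (u + v) = f u + f v.
Proof. by have := Hf 1 u v; rewrite !scale1r. Qed.
Lemma lin0 : f 0 = 0.
Proof. have h := linD 0 0; rewrite addr0 in h. by apply: (addrI (f 0)); rewrite -h addr0. Qed.
Lemma linZ a u : f (a *: u) = a *: f u.
Proof. by have := Hf a u 0; rewrite !addr0 lin0 addr0. Qed.
Lemma linN u : f (- u) = - f u.
Proof. by rewrite -scaleN1r linZ scaleN1r. Qed.
Lemma linB u v : f (u - v) = f u - f v.
Proof. by rewrite linD linN. Qed.
Lemma lin_sum I r (P : pred I) (F : I -> U) :
  f (\sum_(i <- r | P i) F i) = \sum_(i <- r | P i) f (F i).
Proof. exact: (big_morph f linD lin0). Qed.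
End LinHelp.

Lemma lin_restr (R S : pzRingType) (phi : {rmorphism R -> S}) (U V : lmodType S)
  (f : U -> V) : linear f -> linear (f : restr phi U -> restr phi V).
Proof. by move=> Hf a u v; exact: (Hf (phi a)). Qed.

Lemma restr_scaleE (R S : pzRingType) (phi : {rmorphism R -> S}) (U : lmodType S)
  (a : R) (u : restr phi U) : a *: u = (phi a *: (u : U) : U).
Proof. by []. Qed.


Lemma bilin0 (K : comPzRingType) (M N V : lmodType K) :
  bilin (fun (_ : M) (_ : N) => (0 : V)).
Proof. by split=> ? ? ? ?; rewrite scaler0 addr0. Qed.

Lemma tp_uniq (K : comPzRingType) (M N T : lmodType K) (t : M -> N -> T) :
  is_tensor_product t -> forall (V : lmodType K) (h1 h2 : T -> V), linear h1 -> linear h2 ->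
   (forall m n, h1 (t m n) = h2 (t m n)) -> forall x, h1 x = h2 x.
Proof. by move=> [_ Ht] V; apply: ((Ht V _ (bilin0 M N V)).2). Qed.

Lemma tp_ex (K : comPzRingType) (M N T : lmodType K) (t : M -> N -> T) :
  is_tensor_product t -> forall (V : lmodType K) (g : M -> N -> V), bilin g ->
  {h : T -> V | linear h /\ forall m n, h (t m n) = g m n}.
Proof.
move=> [_ Ht] V g Hg; apply: constructive_indefinite_description.
exact: (Ht V g Hg).1.
Qed.

Lemma bilin_restr (R S : comPzRingType) (phi : {rmorphism R -> S}) (M N V : lmodType S)
  (g : M -> N -> V) : bilin g ->
  @bilin R (restr phi M) (restr phi N) (restr phi V) g.
Proof. by move=> [H1 H2]; split=> x; apply: lin_restr. Qed.

Lemma scaleoE (S : pzRingType) (s x : S) : s *: (x : S^o) = s * x.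
Proof. by []. Qed.

Lemma lin_comp (K : pzRingType) (U V W : lmodType K) (f : U -> V) (g : V -> W) :
  linear f -> linear g -> linear (fun x => g (f x)).
Proof. by move=> Hf Hg a u v; rewrite Hf Hg. Qed.

Lemma lin_scal (K : comPzRingType) (U : lmodType K) (V : lmodType K) (f : U -> K^o) (e : V) :
  linear f -> linear (fun x => f x *: e).
Proof. by move=> Hf a u v; rewrite Hf scalerDl scaleoE scalerA. Qed.

Lemma lin_phi (R S : pzRingType) (phi : {rmorphism R -> S}) :
  linear (phi : R^o -> restr phi S^o).
Proof. by move=> a u v; rewrite restr_scaleE scaleoE /= scaleoE rmorphD rmorphM. Qed.

Lemma span_lin (K : comPzRingType) (V W : lmodType K) (P : V -> Prop) (h : V -> W) :
  linear h -> (forall x, P x -> h x = 0) -> forall x, Defs.span P x -> h x = 0.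
Proof.
move=> Hh HP x; elim => [|y Py|r y z _ Hy _ Hz]; [exact: lin0|exact: HP|].
by rewrite Hh Hy Hz scaler0 addr0.
Qed.

Lemma bij_inj (A B : Type) (f : A -> B) : bijective f -> injective f.
Proof. by case=> g fK _; apply: can_inj fK. Qed.


Section Quot.
Variables (K : pzRingType) (V : lmodType K) (W : V -> Prop).
Hypothesis W0 : W 0.
Hypothesis Wc : forall r x y, W x -> W y -> W (r *: x + y).

Lemma WD x y : W x -> W y -> W (x + y).
Proof. by move=> a b; rewrite -[x]scale1r; apply: Wc. Qed.
Lemma WZ r x : W x -> W (r *: x).
Proof. by move=> a; rewrite -[_ *: _]addr0; apply: Wc. Qed.
Lemma WN x : W x -> W (- x).
Proof. by move=> a; rewrite -scaleN1r; apply: WZ. Qed.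
Lemma Weq x y : x = y -> W x -> W y.
Proof. by move=> ->. Qed.

Definition canon (x : V) : V := epsilon (inhabits x) (fun y => W (y - x)).
Lemma canon_spec x : W (canon x - x).
Proof. by apply: (epsilon_spec (inhabits x) (fun y => W (y - x))); exists x; rewrite subrr. Qed.
Lemma canon_eq x y : W (x - y) -> canon x = canon y.
Proof.
move=> Hxy; rewrite /canon.
have -> : (fun z => W (z - x)) = (fun z => W (z - y)).
  apply: functional_extensionality => z; apply: propositional_extensionality; split=> H.
    by apply: (Weq _ (WD H Hxy)); rewrite addrA subrK.
  by apply: (Weq _ (WD H (WN Hxy))); rewrite opprB addrA subrK.
by rewrite (proof_irrelevance _ (inhabits x) (inhabits y)).
Qed.
Lemma canon_eqW x y : canon x = canon y -> W (x - y).
Proof.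
move=> E; apply: (Weq _ (WD (WN (canon_spec x)) (canon_spec y))).
by rewrite E opprB addrA subrK.
Qed.
Lemma canon_idem x : canon (canon x) = canon x.
Proof. exact/canon_eq/canon_spec. Qed.

Definition Qt : Type :=
  (fun (_ : W 0) (_ : forall r x y, W x -> W y -> W (r *: x + y)) => {x : V | canon x == x}) W0 Wc.
HB.instance Definition _ := Choice.on Qt.

Definition mk (x : V) : Qt := exist _ (canon x) (introT eqP (canon_idem x)).
Lemma mk_val (a : Qt) : mk (sval a) = a.
Proof. by case: a => x Hx; apply/val_inj => /=; apply/eqP. Qed.
Lemma mkP x y : mk x = mk y <-> W (x - y).
Proof.
split=> [E|H]; first by apply: canon_eqW; have := congr1 sval E.
by apply/val_inj; rewrite /= (canon_eq H).
Qed.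
Lemma mk_addl x y : mk (sval (mk x) + y) = mk (x + y).
Proof. by apply/mkP; rewrite /= opprD addrACA subrr addr0; apply: canon_spec. Qed.
Lemma mk_addr x y : mk (x + sval (mk y)) = mk (x + y).
Proof. by rewrite addrC mk_addl addrC. Qed.
Lemma mk_opp x : mk (- sval (mk x)) = mk (- x).
Proof. by apply/mkP; rewrite /= -opprD; apply/WN/canon_spec. Qed.
Lemma mk_scale r x : mk (r *: sval (mk x)) = mk (r *: x).
Proof. by apply/mkP; rewrite /= -scalerBr; apply/WZ/canon_spec. Qed.

Definition qadd (a b : Qt) := mk (sval a + sval b).
Definition qopp (a : Qt) := mk (- sval a).
Definition qzero := mk 0.
Definition qscale r (a : Qt) := mk (r *: sval a).

Lemma qaddA : associative qadd.
Proof. by move=> a b c; rewrite /qadd mk_addl mk_addr addrA. Qed.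
Lemma qaddC : commutative qadd.
Proof. by move=> a b; rewrite /qadd addrC. Qed.
Lemma qadd0 : left_id qzero qadd.
Proof. by move=> a; rewrite /qadd /qzero mk_addl add0r mk_val. Qed.
Lemma qaddN : left_inverse qzero qopp qadd.
Proof. by move=> a; rewrite /qadd /qopp mk_addl addNr. Qed.
HB.instance Definition _ := GRing.isZmodule.Build Qt qaddA qaddC qadd0 qaddN.
Lemma qscaleA a b v : qscale a (qscale b v) = qscale (a * b) v.
Proof. by rewrite /qscale mk_scale scalerA. Qed.
Lemma qscale1 : left_id 1 qscale.
Proof. by move=> v; rewrite /qscale scale1r mk_val. Qed.
Lemma qscaleDr : right_distributive qscale qadd.
Proof. by move=> a u v; rewrite /qscale /qadd mk_scale mk_addl mk_addr scalerDr. Qed.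
Lemma qscaleDl v : {morph qscale^~ v : a b / a + b >-> qadd a b}.
Proof. by move=> a b; rewrite /qscale /qadd mk_addl mk_addr scalerDl. Qed.
HB.instance Definition _ := GRing.Zmodule_isLmodule.Build K Qt
  qscaleA qscale1 qscaleDr qscaleDl.

Lemma mk_lin : linear (mk : V -> Qt).
Proof.
move=> r x y; rewrite -[RHS]/(qadd (qscale r (mk x)) (mk y)) /qscale /qadd.
rewrite mk_addr; symmetry; rewrite mk_addl; apply/mkP.
apply: (Weq _ (WZ r (canon_spec x))).
by rewrite scalerBr /= opprD addrACA subrr addr0.
Qed.
Lemma mk0 x : mk x = 0 <-> W x.
Proof. by rewrite -[0 : Qt]/qzero /qzero mkP subr0. Qed.
Definition rep (q : Qt) : V := sval q.
Lemma rep_mk q : mk (rep q) = q.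
Proof. exact: mk_val. Qed.
End Quot.


Lemma ffunDE (I : finType) (K : pzRingType) (M : lmodType K) (f g : {ffun I -> M}) i :
  (f + g) i = f i + g i.
Proof. by rewrite ffunE. Qed.
Lemma ffunZE (I : finType) (K : pzRingType) (M : lmodType K) (k : K) (f : {ffun I -> M}) i :
  (k *: f) i = k *: f i.
Proof. by rewrite ffunE. Qed.

Section FfunTP.
Variables (R S : comPzRingType) (phi : {rmorphism R -> S}) (I : finType).

Definition tf (s : restr phi S^o) (x : {ffun I -> R^o}) : restr phi {ffun I -> S^o} :=
  [ffun i => (s : S) * phi (x i)].
Definition delt (i : I) : {ffun I -> R^o} := [ffun j => (i == j)%:R].

Lemma delt_sum (x : {ffun I -> R^o}) : \sum_i x i *: delt i = x.
Proof.
apply/ffunP => j; rewrite sum_ffunE (bigD1 j) //= big1 ?addr0.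
  by rewrite ffunZE ffunE eqxx scaleoE mulr1.
by move=> i /negbTE ij; rewrite ffunZE ffunE ij scaleoE mulr0.
Qed.

Lemma tf_sum (v : restr phi {ffun I -> S^o}) : \sum_i tf (v i) (delt i) = v.
Proof.
apply/ffunP => j; rewrite sum_ffunE (bigD1 j) //= big1 ?addr0.
  by rewrite !ffunE eqxx rmorph1 mulr1.
by move=> i /negbTE ij; rewrite !ffunE ij rmorph0 mulr0.
Qed.

Lemma ffun_tp : is_tensor_product tf.
Proof.
split.
  split=> [s|x] r u v; apply/ffunP => i; rewrite /tf !ffunE.
    by rewrite !scaleoE rmorphD rmorphM mulrDr mulrCA.
  by rewrite !scaleoE (restr_scaleE r u) scaleoE mulrDl mulrA.
move=> V g [Hg1 Hg2]; split.
  exists (fun v : restr phi {ffun I -> S^o} => \sum_i g (v i) (delt i)); split.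
    move=> r u v; rewrite scaler_sumr -big_split /=; apply: eq_bigr => i _.
    have -> : (r *: u + v) i = r *: (u i : restr phi S^o) + v i.
      by rewrite ffunDE restr_scaleE ffunZE.
    by rewrite Hg2.
  move=> s x; rewrite -{2}(delt_sum x) (lin_sum (Hg1 s)); apply: eq_bigr => i _.
  rewrite (linZ (Hg1 s)) -(linZ (Hg2 _)) /tf ffunE; congr g.
  by rewrite restr_scaleE scaleoE mulrC.
move=> h1 h2 L1 L2 E v; rewrite -(tf_sum v) (lin_sum L1) (lin_sum L2).
by apply: eq_bigr => i _; rewrite E.
Qed.
End FfunTP.


Lemma lin_sub (K : pzRingType) (U V : lmodType K) (f g : U -> V) :
  linear f -> linear g -> linear (fun x => f x - g x).
Proof.
move=> Hf Hg a u v; rewrite Hf Hg scalerBr.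
by rewrite opprD addrACA.
Qed.

Lemma lin_eq0 (K : pzRingType) (U V : lmodType K) (f g : U -> V) x :
  f x - g x = 0 -> f x = g x.
Proof. by move/eqP; rewrite subr_eq0 => /eqP. Qed.

Lemma rowgen (R : pzRingType) n (M : lmodType R) (h : 'rV[R]_n -> M) :
  linear h -> (forall i, h (delta_mx 0 i) = 0) -> forall u, h u = 0.
Proof.
move=> Hh H0 u; rewrite (row_sum_delta u) (lin_sum Hh) big1 // => i _.
by rewrite (linZ Hh) H0 scaler0.
Qed.

Lemma lin_add (K : pzRingType) (U V : lmodType K) (f g : U -> V) :
  linear f -> linear g -> linear (fun x => f x + g x).
Proof. by move=> Hf Hg a u v; rewrite Hf Hg scalerDr addrACA. Qed.

Lemma lin_Sscale (R S : comPzRingType) (phi : {rmorphism R -> S}) (U : lmodType S) (s : S) :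
  linear (fun y : restr phi U => (s *: (y : U) : restr phi U)).
Proof.
move=> r u v; rewrite !restr_scaleE scalerDr !scalerA.
by rewrite mulrC.
Qed.

Lemma lin_scalev (R S : comPzRingType) (phi : {rmorphism R -> S}) (U : lmodType S) (u : U) :
  linear (fun s : restr phi S^o => ((s : S) *: u : restr phi U)).
Proof. by move=> r a b; rewrite !restr_scaleE scaleoE scalerDl scalerA. Qed.

Section Conv.
Variables (R : comPzRingType) (B : lmodType R) (mulB : B -> B -> B).
Hypothesis HmulB : bilin mulB.
Variable (beta : B -> B -> R^o).
Hypothesis Hbeta : is_IBF_form mulB beta.
Variables (S : comPzRingType) (phi : {rmorphism R -> S}).
Variables (TTB : lmodType R) (ttB : B -> B -> TTB) (QB : lmodType R) (qB : TTB -> QB).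
Hypothesis HQB : is_IBF_quot mulB ttB qB.
Variable (betabar : QB -> R^o).
Hypothesis Hbetabar_lin : linear betabar.
Hypothesis Hbetabar : forall a b, betabar (qB (ttB a b)) = beta a b.
Variables (T : lmodType S) (tau : B -> restr phi S^o -> restr phi T).
Hypothesis Htau : is_tensor_product tau.
Hypothesis HtauS : forall (s : S) b (s' : S), s *: (tau b s' : T) = tau b (s * s').
Variable (mulT : T -> T -> T).
Hypothesis HmulT_bil : bilin mulT.
Hypothesis HmulT : forall a (s : S) b (s' : S),
     mulT (tau a s) (tau b s') = tau (mulB a b) (s * s').
Variable (betaS : T -> T -> S^o).
Hypothesis HbetaS_bil : bilin betaS.
Hypothesis HbetaS : forall a (s : S) b (s' : S),
     betaS (tau a s) (tau b s') = phi (beta a b) * s * s'.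
Variables (TTT : lmodType S) (ttT : T -> T -> TTT) (QT : lmodType S) (qT : TTT -> QT).
Hypothesis HQT : is_IBF_quot mulT ttT qT.
Variable (betaSbar : QT -> S^o).
Hypothesis HbetaSbar_lin : linear betaSbar.
Hypothesis HbetaSbar : forall x y, betaSbar (qT (ttT x y)) = betaS x y.
Variables (n : nat) (pr : 'rV[R]_n -> B).
Hypothesis Hpr : linear pr.
Hypothesis Hprs : forall y, exists x, pr x = y.
Variables (m : nat) (kk : 'I_m -> 'rV[R]_n).
Hypothesis Hkk : forall x, pr x = 0 <-> Defs.span (fun z => exists i, z = kk i) x.

Definition lft (b : B) : 'rV[R]_n := proj1_sig (constructive_indefinite_description _ (Hprs b)).
Lemma lftK b : pr (lft b) = b.
Proof. exact: proj2_sig (constructive_indefinite_description _ (Hprs b)). Qed.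
Definition ev (i : 'I_n) : 'rV[R]_n := delta_mx 0 i.
Definition pe i := pr (ev i).
Definition ml i j := lft (mulB (pe i) (pe j)).

Lemma pr_exp u : pr u = \sum_i u 0 i *: pe i.
Proof.
by rewrite {1}(row_sum_delta u) (lin_sum Hpr); apply: eq_bigr => i _; rewrite (linZ Hpr).
Qed.

Lemma bgen (M : lmodType R) (h : B -> M) :
  linear h -> (forall i, h (pe i) = 0) -> forall b, h b = 0.
Proof.
move=> Hh H0 b; rewrite -(lftK b).
by apply: (rowgen (h := fun u => h (pr u))); [exact: lin_comp|].
Qed.

Local Notation NN := ('I_n * 'I_n)%type.
Definition outer (u v : 'rV[R]_n) : {ffun NN -> R^o} :=
  [ffun ij => u 0 ij.1 * v 0 ij.2].

Lemma outer_linl v : linear (fun u => outer u v).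
Proof.
move=> r u u'; apply/ffunP => ij.
by rewrite !ffunE !mxE scaleoE mulrDl mulrA.
Qed.
Lemma outer_linr u : linear (outer u).
Proof.
move=> r v v'; apply/ffunP => ij.
by rewrite !ffunE !mxE scaleoE mulrDr mulrCA.
Qed.

Local Notation Ix := (('I_m * 'I_n + 'I_n * 'I_m) + ('I_n * 'I_n * 'I_n + 'I_n * 'I_n * 'I_n))%type.
Definition Gen (g : Ix) : {ffun NN -> R^o} :=
  match g with
  | inl (inl (i, j)) => outer (kk i) (ev j)
  | inl (inr (i, j)) => outer (ev i) (kk j)
  | inr (inl (i, j, l)) => outer (ml i j) (ev l) - outer (ev i) (ml j l)
  | inr (inr (i, j, l)) => outer (ml i j) (ev l) - outer (ev j) (ml l i)
  end.

Definition LL (Y : {ffun NN -> R^o}) : TTB := \sum_ij Y ij *: ttB (pe ij.1) (pe ij.2).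
Lemma LL_lin : linear LL.
Proof.
move=> r Y Y'; rewrite /LL scaler_sumr -big_split; apply: eq_bigr => ij _.
by rewrite !ffunE scaleoE scalerDl scalerA.
Qed.

Lemma LL_outer u v : LL (outer u v) = ttB (pr u) (pr v).
Proof.
have [[Ht1 Ht2] _] := HQB.1.
rewrite /LL (eq_bigr (fun ij => (fun i j => outer u v (i, j) *: ttB (pe i) (pe j)) ij.1 ij.2));
  last by case.
rewrite -(pair_bigA _ (fun i j => outer u v (i, j) *: ttB (pe i) (pe j))) /= (pr_exp u) (lin_sum (Ht2 _)); apply: eq_bigr => i _.
rewrite (linZ (Ht2 _)) (pr_exp v) (lin_sum (Ht1 _)) scaler_sumr; apply: eq_bigr => j _.
by rewrite (linZ (Ht1 _)) scalerA ffunE.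
Qed.

Lemma kk0 i : pr (kk i) = 0.
Proof. by apply/Hkk; apply: Defs.span_gen; exists i. Qed.

Lemma qBLGen g : qB (LL (Gen g)) = 0.
Proof.
have [[[Ht1 Ht2] _] [Hq [_ Hqk]]] := HQB.
case: g => [[[i j]|[i j]]|[[[i j] l]|[[i j] l]]] /=; rewrite ?(linB LL_lin) !LL_outer.
- by rewrite kk0 (lin0 (Ht2 _)) (lin0 Hq).
- by rewrite kk0 (lin0 (Ht1 _)) (lin0 Hq).
- apply/Hqk/Defs.span_gen; exists (pe i), (pe j), (pe l); left.
  by rewrite /ml !lftK.
- apply/Hqk/Defs.span_gen; exists (pe i), (pe j), (pe l); right.
  by rewrite /ml !lftK.
Qed.

Definition c0 (Y : {ffun NN -> R^o}) : R^o := \sum_ij Y ij * beta (pe ij.1) (pe ij.2).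
Lemma c0E Y : c0 Y = betabar (qB (LL Y)).
Proof.
rewrite /LL (lin_sum (lin_comp HQB.2.1 Hbetabar_lin)); apply: eq_bigr => ij _.
by rewrite (linZ (lin_comp HQB.2.1 Hbetabar_lin)) /= Hbetabar.
Qed.
Lemma c0_lin : linear c0.
Proof. by move=> r Y Y'; rewrite !c0E (lin_comp (lin_comp LL_lin HQB.2.1) Hbetabar_lin). Qed.
Lemma c0Gen g : c0 (Gen g) = 0.
Proof. by rewrite c0E qBLGen (lin0 Hbetabar_lin). Qed.
Lemma c0_outer u v : c0 (outer u v) = beta (pr u) (pr v).
Proof. by rewrite c0E LL_outer Hbetabar. Qed.

Definition mS (Y : {ffun NN -> R^o}) : {ffun NN -> S^o} := [ffun ij => phi (Y ij)].
Lemma mS_lin : linear (mS : {ffun NN -> R^o} -> restr phi {ffun NN -> S^o}).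
Proof.
move=> r Y Y'; apply/ffunP => ij.
by rewrite restr_scaleE !ffunE scaleoE /= scaleoE rmorphD rmorphM.
Qed.

Definition FS (X : {ffun Ix -> S^o}) : {ffun NN -> S^o} := \sum_g X g *: mS (Gen g).
Lemma FS_lin : linear FS.
Proof.
move=> r X X'; rewrite /FS scaler_sumr -big_split; apply: eq_bigr => g _.
by rewrite !ffunE scaleoE scalerDl scalerA.
Qed.

Definition WW (Y : {ffun NN -> S^o}) : Prop := exists X, FS X = Y.
Lemma WW0 : WW 0.
Proof. by exists 0; rewrite (lin0 FS_lin). Qed.
Lemma WWc r x y : WW x -> WW y -> WW (r *: x + y).
Proof. by move=> [X <-] [Y <-]; exists (r *: X + Y); rewrite FS_lin. Qed.

Local Notation Q := (Qt WW0 WWc).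
Definition pq : {ffun NN -> S^o} -> Q := mk WW0 WWc.
Lemma pq_lin : linear pq.
Proof. exact: mk_lin. Qed.

Definition dS (g : Ix) : {ffun Ix -> S^o} := [ffun h => (g == h)%:R].
Lemma WGen g : WW (mS (Gen g)).
Proof.
exists (dS g); rewrite /FS (bigD1 g) //= big1 ?addr0.
  by rewrite ffunE eqxx scale1r.
by move=> h /negbTE; rewrite ffunE eq_sym => ->; rewrite scale0r.
Qed.
Lemma pqGen g : pq (mS (Gen g)) = 0.
Proof. exact/mk0/WGen. Qed.

Definition Om (x y : 'rV[R]_n) : restr phi Q := pq (mS (outer x y)).
Lemma pqmS_lin : linear (fun Y => (pq (mS Y) : restr phi Q)).
Proof. exact: (lin_comp mS_lin (lin_restr pq_lin)). Qed.
Lemma Om_linl y : linear (fun x => Om x y).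
Proof. exact: (lin_comp (outer_linl y) pqmS_lin). Qed.
Lemma Om_linr x : linear (Om x).
Proof. exact: (lin_comp (outer_linr x) pqmS_lin). Qed.

Lemma Om_kerl x y : pr x = 0 -> Om x y = 0.
Proof.
move/Hkk; apply: (span_lin (h := fun x => Om x y)); first exact: Om_linl.
move=> z [i ->]; move: y; apply: rowgen; first exact: Om_linr.
by move=> j; rewrite /Om -/(ev j) -[outer _ _]/(Gen (inl (inl (i, j)))) pqGen.
Qed.
Lemma Om_kerr x y : pr y = 0 -> Om x y = 0.
Proof.
move/Hkk; apply: (span_lin (h := fun y => Om x y)); first exact: Om_linr.
move=> z [i ->]; move: x; apply: rowgen; first exact: Om_linl.
by move=> j; rewrite /Om -/(ev j) -[outer _ _]/(Gen (inl (inr (j, i)))) pqGen.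
Qed.
Lemma Om_prl x x' y : pr x = pr x' -> Om x y = Om x' y.
Proof.
move=> E; apply: lin_eq0; rewrite -(linB (Om_linl y)); apply: Om_kerl.
by rewrite (linB Hpr) E subrr.
Qed.
Lemma Om_prr x y y' : pr y = pr y' -> Om x y = Om x y'.
Proof.
move=> E; apply: lin_eq0; rewrite -(linB (Om_linr x)); apply: Om_kerr.
by rewrite (linB Hpr) E subrr.
Qed.

Definition om (a b : B) : restr phi Q := Om (lft a) (lft b).
Lemma om_pr u v : om (pr u) (pr v) = Om u v.
Proof. by rewrite /om (Om_prl _ (lftK _)) (Om_prr _ (lftK _)). Qed.
Lemma om_linl b : linear (fun a => om a b).
Proof.
move=> r a a'; rewrite /om -(Om_linl (lft b)); apply: Om_prl.
by rewrite Hpr !lftK.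
Qed.
Lemma om_linr a : linear (om a).
Proof.
move=> r b b'; rewrite /om -(Om_linr (lft a)); apply: Om_prr.
by rewrite Hpr !lftK.
Qed.
Lemma om_pe i j : om (pe i) (pe j) = Om (ev i) (ev j).
Proof. exact: om_pr. Qed.

Lemma om_rel1 a b c : om (mulB a b) c = om a (mulB b c).
Proof.
apply/eqP; rewrite -subr_eq0; apply/eqP; move: a.
apply: (bgen (h := fun a => om (mulB a b) c - om a (mulB b c))).
  exact: (lin_sub (lin_comp (HmulB.2 b) (om_linl c)) (om_linl _)).
move=> i; move: b.
apply: (bgen (h := fun b => om (mulB (pe i) b) c - om (pe i) (mulB b c))).
  exact: (lin_sub (lin_comp (HmulB.1 _) (om_linl c)) (lin_comp (HmulB.2 c) (om_linr _))).
move=> j; move: c.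
apply: (bgen (h := fun c => om (mulB (pe i) (pe j)) c - om (pe i) (mulB (pe j) c))).
  exact: (lin_sub (om_linr _) (lin_comp (HmulB.1 _) (om_linr _))).
move=> l.
rewrite /om -/(ml i j) -/(ml j l) (Om_prr _ (y' := ev l) (lftK _)) (Om_prl _ (x' := ev i) (lftK _)).
by rewrite /Om -(linB pqmS_lin) -[_ - _]/(Gen (inr (inl (i, j, l)))) pqGen.
Qed.

Lemma om_rel2 a b c : om (mulB a b) c = om b (mulB c a).
Proof.
apply/eqP; rewrite -subr_eq0; apply/eqP; move: a.
apply: (bgen (h := fun a => om (mulB a b) c - om b (mulB c a))).
  exact: (lin_sub (lin_comp (HmulB.2 b) (om_linl c)) (lin_comp (HmulB.1 c) (om_linr _))).
move=> i; move: b.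
apply: (bgen (h := fun b => om (mulB (pe i) b) c - om b (mulB c (pe i)))).
  exact: (lin_sub (lin_comp (HmulB.1 _) (om_linl c)) (om_linl _)).
move=> j; move: c.
apply: (bgen (h := fun c => om (mulB (pe i) (pe j)) c - om (pe j) (mulB c (pe i)))).
  exact: (lin_sub (om_linr _) (lin_comp (HmulB.2 _) (om_linr _))).
move=> l.
rewrite /om -/(ml i j) -/(ml l i) (Om_prr _ (y' := ev l) (lftK _)) (Om_prl _ (x' := ev j) (lftK _)).
by rewrite /Om -(linB pqmS_lin) -[_ - _]/(Gen (inr (inr (i, j, l)))) pqGen.
Qed.

Lemma th_bil a : bilin (fun b (s' : restr phi S^o) => ((s' : S) *: (om a b : Q) : restr phi Q)).
Proof.
split=> [b|s']; first exact: lin_scalev.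
exact: (lin_comp (om_linr a) (lin_Sscale (phi:=phi) s')).
Qed.
Definition th a := proj1_sig (tp_ex Htau (th_bil a)).
Lemma th_lin a : linear (th a).
Proof. exact: (proj2_sig (tp_ex Htau (th_bil a))).1. Qed.
Lemma th_tau a b s' : th a (tau b s') = ((s' : S) *: (om a b : Q) : Q).
Proof. exact: (proj2_sig (tp_ex Htau (th_bil a))).2. Qed.

Lemma th_linl r a a' y : th (r *: a + a') y = r *: th a y + th a' y.
Proof.
move: y; apply: (tp_uniq Htau (th_lin _)).
  exact: (lin_add (lin_comp (th_lin a) (lin_Sscale (phi:=phi) (phi r))) (th_lin a')).
move=> b s'; rewrite !th_tau om_linl !restr_scaleE scalerDr !scalerA.
by rewrite mulrC.
Qed.
Lemma th_S a (s : S) (y : T) : th a (s *: y) = (s *: (th a y : Q) : Q).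
Proof.
move: y; apply: (tp_uniq Htau (h1 := fun y => th a (s *: (y : T)))).
- exact: (lin_comp (lin_Sscale (phi:=phi) s) (th_lin a)).
- exact: (lin_comp (th_lin a) (lin_Sscale (phi:=phi) s)).
move=> b s'; rewrite HtauS !th_tau scalerA.
by [].
Qed.

Lemma ps_bil (y : T) : bilin (fun a (s : restr phi S^o) => ((s : S) *: (th a y : Q) : restr phi Q)).
Proof.
split=> [a|s]; first exact: lin_scalev.
move=> r a a'; rewrite th_linl !restr_scaleE scalerDr !scalerA.
by rewrite mulrC.
Qed.
Definition ps (x y : T) : Q := proj1_sig (tp_ex Htau (ps_bil y)) x.
Lemma ps_linl (y : T) : linear (fun x : restr phi T => (ps x y : restr phi Q)).
Proof. exact: (proj2_sig (tp_ex Htau (ps_bil y))).1. Qed.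
Lemma ps_tau a s y : ps (tau a s) y = (s : S) *: (th a y : Q).
Proof. exact: (proj2_sig (tp_ex Htau (ps_bil y))).2. Qed.
Lemma ps_tau2 a s b s' : ps (tau a s) (tau b s') = (s : S) *: ((s' : S) *: (om a b : Q)).
Proof. by rewrite ps_tau th_tau. Qed.

Lemma ps_Sl (s : S) x y : ps (s *: x) y = s *: ps x y.
Proof.
move: x; apply: (tp_uniq Htau (h1 := fun x => (ps (s *: (x : T)) y : restr phi Q)) (h2 := fun x => (s *: ps x y : restr phi Q))).
- exact: (lin_comp (lin_Sscale (phi:=phi) s) (ps_linl y)).
- exact: (lin_comp (ps_linl y) (lin_Sscale (phi:=phi) s)).
by move=> a s0; rewrite HtauS !ps_tau scalerA.
Qed.
Lemma ps_Sr (s : S) x y : ps x (s *: y) = s *: ps x y.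
Proof.
move: x; apply: (tp_uniq Htau (h1 := fun x => (ps x (s *: y) : restr phi Q)) (h2 := fun x => (s *: ps x y : restr phi Q))).
- exact: ps_linl.
- exact: (lin_comp (ps_linl y) (lin_Sscale (phi:=phi) s)).
by move=> a s0; rewrite !ps_tau th_S !scalerA mulrC.
Qed.
Lemma ps_Dr x y y' : ps x (y + y') = ps x y + ps x y'.
Proof.
move: x; apply: (tp_uniq Htau (h1 := fun x => (ps x (y + y') : restr phi Q)) (h2 := fun x => (ps x y + ps x y' : restr phi Q))).
- exact: ps_linl.
- exact: (lin_add (ps_linl y) (ps_linl y')).
by move=> a s0; rewrite !ps_tau (linD (th_lin a)) scalerDr.
Qed.
Lemma ps_S : bilin ps.
Proof.
split=> [x|y] r u v.
  by rewrite ps_Dr ps_Sr.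
by rewrite (linD (ps_linl y)) ps_Sl.
Qed.
Lemma ps_linr (x : T) : linear (fun y : restr phi T => (ps x y : restr phi Q)).
Proof. exact: (lin_restr (ps_S.1 x)). Qed.

Definition Ps := proj1_sig (tp_ex HQT.1 ps_S).
Lemma Ps_lin : linear Ps.
Proof. exact: (proj2_sig (tp_ex HQT.1 ps_S)).1. Qed.
Lemma Ps_tt x y : Ps (ttT x y) = ps x y.
Proof. exact: (proj2_sig (tp_ex HQT.1 ps_S)).2. Qed.

Lemma mulT_linl (y : T) : linear (fun x : restr phi T => (mulT x y : restr phi T)).
Proof. exact: (lin_restr (HmulT_bil.2 y)). Qed.
Lemma mulT_linr (x : T) : linear (fun y : restr phi T => (mulT x y : restr phi T)).
Proof. exact: (lin_restr (HmulT_bil.1 x)). Qed.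

Lemma ps_rel1 x y z : ps (mulT x y) z = ps x (mulT y z).
Proof.
move: x; apply: (tp_uniq Htau (h1 := fun x => (ps (mulT x y) z : restr phi Q)) (h2 := fun x => (ps x (mulT y z) : restr phi Q))).
- exact: (lin_comp (mulT_linl y) (ps_linl z)).
- exact: ps_linl.
move=> a s; move: y.
apply: (tp_uniq Htau (h1 := fun y => (ps (mulT (tau a s) y) z : restr phi Q)) (h2 := fun y => (ps (tau a s) (mulT y z) : restr phi Q))).
- exact: (lin_comp (mulT_linr _) (ps_linl z)).
- exact: (lin_comp (mulT_linl z) (ps_linr _)).
move=> b s'; move: z.
apply: (tp_uniq Htau (h1 := fun z => (ps (mulT (tau a s) (tau b s')) z : restr phi Q)) (h2 := fun z => (ps (tau a s) (mulT (tau b s') z) : restr phi Q))).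
- exact: ps_linr.
- exact: (lin_comp (mulT_linr _) (ps_linr _)).
move=> c s''; rewrite !HmulT !ps_tau2 om_rel1 !scalerA.
by rewrite mulrA.
Qed.

Lemma ps_rel2 x y z : ps (mulT x y) z = ps y (mulT z x).
Proof.
move: x; apply: (tp_uniq Htau (h1 := fun x => (ps (mulT x y) z : restr phi Q)) (h2 := fun x => (ps y (mulT z x) : restr phi Q))).
- exact: (lin_comp (mulT_linl y) (ps_linl z)).
- exact: (lin_comp (mulT_linr z) (ps_linr _)).
move=> a s; move: y.
apply: (tp_uniq Htau (h1 := fun y => (ps (mulT (tau a s) y) z : restr phi Q)) (h2 := fun y => (ps y (mulT z (tau a s)) : restr phi Q))).
- exact: (lin_comp (mulT_linr _) (ps_linl z)).
- exact: ps_linl.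
move=> b s'; move: z.
apply: (tp_uniq Htau (h1 := fun z => (ps (mulT (tau a s) (tau b s')) z : restr phi Q)) (h2 := fun z => (ps (tau b s') (mulT z (tau a s)) : restr phi Q))).
- exact: ps_linr.
- exact: (lin_comp (mulT_linl _) (ps_linr _)).
move=> c s''; rewrite !HmulT !ps_tau2 om_rel2 !scalerA.
by have -> : s * s' * s'' = s' * (s'' * s) by rewrite [s'' * s]mulrC mulrA [s' * s]mulrC.
Qed.

Lemma Ps_ker z : qT z = 0 -> Ps z = 0.
Proof.
move/(HQT.2.2.2 z); apply: span_lin; first exact: Ps_lin.
move=> w [a [b [c [->|->]]]]; rewrite (linB Ps_lin) !Ps_tt.
  by rewrite ps_rel1 subrr.
by rewrite ps_rel2 subrr.
Qed.

Definition CS (Y : {ffun NN -> S^o}) : S^o := \sum_ij Y ij * phi (beta (pe ij.1) (pe ij.2)).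
Lemma CS_lin : linear CS.
Proof.
move=> r Y Y'; rewrite /CS scaler_sumr -big_split; apply: eq_bigr => ij _.
by rewrite !ffunE !scaleoE mulrDl mulrA.
Qed.
Lemma CS_mS Y : CS (mS Y) = phi (c0 Y).
Proof.
rewrite /CS /c0 rmorph_sum; apply: eq_bigr => ij _.
by rewrite ffunE rmorphM.
Qed.
Lemma CS_FS X : CS (FS X) = 0.
Proof.
rewrite /FS (lin_sum CS_lin) big1 // => g _.
by rewrite (linZ CS_lin) CS_mS c0Gen rmorph0 scaler0.
Qed.

Definition ct (q : Q) : S^o := CS (rep q).
Lemma ct_pq Y : ct (pq Y) = CS Y.
Proof.
apply/eqP; rewrite -subr_eq0 -(linB CS_lin); apply/eqP.
have [X HX] := canon_spec WW0 Y.
by rewrite -HX CS_FS.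
Qed.
Lemma ct_lin : linear ct.
Proof.
move=> r q q'; rewrite -(rep_mk q) -(rep_mk q') -/pq.
by rewrite -pq_lin !ct_pq CS_lin.
Qed.

Lemma S1 z : ct (Ps z) = betaSbar (qT z).
Proof.
move: z; apply: (tp_uniq HQT.1 (h1 := fun z => ct (Ps z)) (h2 := fun z => betaSbar (qT z))).
- exact: (lin_comp Ps_lin ct_lin).
- exact: (lin_comp HQT.2.1 HbetaSbar_lin).
move=> x y; rewrite Ps_tt HbetaSbar; move: x.
apply: (tp_uniq Htau (h1 := fun x => (ct (ps x y) : restr phi S^o)) (h2 := fun x => (betaS x y : restr phi S^o))).
- exact: (lin_comp (ps_linl y) (lin_restr ct_lin)).
- exact: (lin_restr (HbetaS_bil.2 y)).
move=> a s; move: y.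
apply: (tp_uniq Htau (h1 := fun y => (ct (ps (tau a s) y) : restr phi S^o)) (h2 := fun y => (betaS (tau a s) y : restr phi S^o))).
- exact: (lin_comp (ps_linr _) (lin_restr ct_lin)).
- exact: (lin_restr (HbetaS_bil.1 _)).
move=> b s'; rewrite ps_tau2 !(linZ ct_lin) HbetaS.
rewrite /om /Om ct_pq CS_mS c0_outer !lftK !scaleoE.
by rewrite mulrA mulrC mulrA.
Qed.

Definition LS (Y : {ffun NN -> S^o}) : TTT :=
  \sum_ij Y ij *: ttT (tau (pe ij.1) 1) (tau (pe ij.2) 1).

Lemma mS_outer_ev i j : mS (outer (ev i) (ev j)) = delt S (i, j).
Proof.
apply/ffunP => [[k l]]; rewrite !ffunE /= !mxE /= -natrM rmorph_nat -mulnb.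
by rewrite /= [k == i]eq_sym [l == j]eq_sym.
Qed.

Lemma S2 Y : Ps (LS Y) = pq Y.
Proof.
rewrite /LS (lin_sum Ps_lin) -{2}(delt_sum Y) (lin_sum pq_lin); apply: eq_bigr => ij _.
rewrite (linZ Ps_lin) (linZ pq_lin) Ps_tt ps_tau2 !scale1r om_pe /Om.
by rewrite mS_outer_ev; case: ij.
Qed.

Definition cvS (Y : {ffun NN -> S^o}) : {ffun unit -> S^o} := [ffun _ => CS Y].
Lemma cvS_lin : linear cvS.
Proof. by move=> r Y Y'; apply/ffunP => u; rewrite !ffunE CS_lin. Qed.

Hypothesis HbSbij : bijective betaSbar.

Lemma exS1 : @exact_at R (restr phi {ffun Ix -> S^o}) (restr phi {ffun NN -> S^o})
   (restr phi {ffun unit -> S^o}) FS cvS.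
Proof.
move=> Y; split; last first.
  by move=> [X <-]; apply/ffunP => u; rewrite !ffunE CS_FS.
move=> /ffunP /(_ tt); rewrite !ffunE => HY.
have H0 : qT (LS Y) = 0.
  apply: (bij_inj HbSbij); rewrite (lin0 HbetaSbar_lin) -S1 S2 ct_pq.
  exact: HY.
have : pq Y = 0 by rewrite -S2 Ps_ker.
by move/mk0.
Qed.

Lemma exS2 : @exact_at R (restr phi {ffun NN -> S^o}) (restr phi {ffun unit -> S^o})
   (restr phi {ffun unit -> S^o}) cvS (fun _ => 0).
Proof.
move=> y; split => // _.
have [binv bK bK'] := HbSbij.
have [w Hw] := HQT.2.2.1 (binv (y tt)).
exists (rep (Ps w)); apply/ffunP => [[]]; rewrite ffunE.
by rewrite -[CS _]/(ct (Ps w)) S1 Hw bK'.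
Qed.

Definition fR (X : {ffun Ix -> R^o}) : {ffun NN -> R^o} := \sum_g X g *: Gen g.
Lemma fR_lin : linear fR.
Proof.
move=> r X X'; rewrite /fR scaler_sumr -big_split; apply: eq_bigr => g _.
by rewrite !ffunE scaleoE scalerDl scalerA.
Qed.
Definition cv (Y : {ffun NN -> R^o}) : {ffun unit -> R^o} := [ffun _ => c0 Y].
Lemma cv_lin : linear cv.
Proof. by move=> r Y Y'; apply/ffunP => u; rewrite !ffunE c0_lin. Qed.

Lemma compat1 s X : FS (tf (phi:=phi) s X) = tf (phi:=phi) s (fR X).
Proof.
apply/ffunP => ij; rewrite /FS /fR !ffunE !sum_ffunE rmorph_sum mulr_sumr.
apply: eq_bigr => g _; rewrite !ffunE !scaleoE rmorphM.
by rewrite mulrA.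
Qed.
Lemma compat2 s Y : cvS (tf (phi:=phi) s Y) = tf (phi:=phi) s (cv Y).
Proof.
apply/ffunP => u; rewrite /cvS /cv /CS /c0 !ffunE rmorph_sum mulr_sumr.
apply: eq_bigr => ij _; rewrite !ffunE !rmorphM.
by rewrite mulrA.
Qed.
Lemma compat0 s (y : {ffun unit -> R^o}) :
  (fun _ : restr phi {ffun unit -> S^o} => (0 : restr phi {ffun unit -> S^o})) (tf (phi:=phi) s y)
  = tf (phi:=phi) s ((fun _ : {ffun unit -> R^o} => (0 : {ffun unit -> R^o})) y).
Proof. by apply/ffunP => u; rewrite !ffunE rmorph0 mulr0. Qed.

Lemma lin_zero (K : pzRingType) (U V : lmodType K) : linear (fun _ : U => (0 : V)).
Proof. by move=> a u v; rewrite scaler0 addr0. Qed.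

Hypothesis Hff : faithfully_flat (restr phi S^o).

Lemma exR1 : exact_at fR cv.
Proof.
have H := (@Hff _ _ _ fR cv fR_lin cv_lin _ _ _ _ _ _ (ffun_tp phi Ix) (ffun_tp phi NN)
  (ffun_tp phi unit)).
have H2 := H FS cvS (lin_restr FS_lin).
have H3 := H2 (lin_restr cvS_lin).
have H4 := H3 compat1.
have H5 := H4 compat2.
exact: (H5.2 exS1).
Qed.
Lemma exR2 : exact_at cv (fun _ : {ffun unit -> R^o} => (0 : {ffun unit -> R^o})).
Proof.
have H := (@Hff _ _ _ cv (fun _ : {ffun unit -> R^o} => (0 : {ffun unit -> R^o})) cv_lin
  (@lin_zero _ _ _) _ _ _ _ _ _ (ffun_tp phi NN) (ffun_tp phi unit) (ffun_tp phi unit) cvS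
  (fun _ : restr phi {ffun unit -> S^o} => (0 : restr phi {ffun unit -> S^o}))
  (lin_restr cvS_lin) (@lin_zero _ _ _) compat2 compat0).
apply: H.2.
exact: exS2.
Qed.

Lemma partB2 : bijective betabar.
Proof.
have [Ht [Hq [Hqs Hqk]]] := HQB.
have [Y0 HY0] := (exR2 [ffun _ => 1]).1 erefl.
have cY0 : c0 Y0 = 1 by have := congr1 (fun f : {ffun unit -> R^o} => f tt) HY0; rewrite !ffunE.
set x0 := qB (LL Y0).
have bx0 : betabar x0 = 1 by rewrite -c0E.
have qBfR X : qB (LL (fR X)) = 0.
  rewrite /fR (lin_sum (lin_comp LL_lin Hq)) big1 // => g _.
  by rewrite (linZ (lin_comp LL_lin Hq)) /= qBLGen scaler0.
have C1 a b : qB (ttB a b) = beta a b *: x0.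
  set Y := outer (lft a) (lft b).
  have LY : LL Y = ttB a b by rewrite LL_outer !lftK.
  have cY : c0 Y = beta a b by rewrite c0_outer !lftK.
  have : cv (Y - c0 Y *: Y0) = 0.
    apply/ffunP => u; rewrite !ffunE (linB c0_lin) (linZ c0_lin) cY0 scaleoE mulr1.
    by rewrite subrr.
  move/(exR1 _).1 => [X HX].
  have := qBfR X; rewrite HX (linB (lin_comp LL_lin Hq)) (linZ (lin_comp LL_lin Hq)) /=.
  by rewrite LY cY => /eqP; rewrite subr_eq0 => /eqP.
have C2 y : qB y = betabar (qB y) *: x0.
  move: y; apply: (tp_uniq Ht (h1 := qB) (h2 := fun y => betabar (qB y) *: x0)) => //.
    exact: (lin_scal x0 (lin_comp Hq Hbetabar_lin)).
  by move=> a b; rewrite Hbetabar C1.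
exists (fun r : R^o => r *: x0).
  by move=> u; have [y <-] := Hqs u; rewrite -C2.
by move=> r; rewrite (linZ Hbetabar_lin) bx0 scaleoE mulr1.
Qed.

End Conv.

Lemma partB1
  (R : comPzRingType) (B : lmodType R) (mulB : B -> B -> B)
  (beta : B -> B -> R^o)
  (S : comPzRingType) (phi : {rmorphism R -> S})
  (TTB : lmodType R) (ttB : B -> B -> TTB) (QB : lmodType R) (qB : TTB -> QB)
  (HQB : is_IBF_quot mulB ttB qB)
  (betabar : QB -> R^o) (Hbetabar_lin : linear betabar)
  (Hbetabar : forall a b, betabar (qB (ttB a b)) = beta a b)
  (T : lmodType S) (tau : B -> restr phi S^o -> restr phi T)
  (Htau : is_tensor_product tau)
  (HtauS : forall (s : S) b (s' : S), s *: (tau b s' : T) = tau b (s * s'))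
  (mulT : T -> T -> T)
  (HmulT : forall a (s : S) b (s' : S),
     mulT (tau a s) (tau b s') = tau (mulB a b) (s * s'))
  (betaS : T -> T -> S^o) (HbetaS_bil : bilin betaS)
  (HbetaS : forall a (s : S) b (s' : S),
     betaS (tau a s) (tau b s') = phi (beta a b) * s * s')
  (TTT : lmodType S) (ttT : T -> T -> TTT) (QT : lmodType S) (qT : TTT -> QT)
  (HQT : is_IBF_quot mulT ttT qT)
  (betaSbar : QT -> S^o) (HbetaSbar_lin : linear betaSbar)
  (HbetaSbar : forall x y, betaSbar (qT (ttT x y)) = betaS x y) :
  bijective betabar -> bijective betaSbar.
Proof.
move=> [binv bK bK'].
have [Ht [Hq [Hqs Hqk]]] := HQB.
have [HtT [HqT [HqTs HqTk]]] := HQT.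
set x0 := binv 1.
have bx0 : betabar x0 = 1 by rewrite /x0 bK'.
have Hu : forall u, u = betabar u *: x0.
  move=> u; apply: (bij_inj (Bijective bK bK')).
  by rewrite linZ // scaleoE bx0 mulr1.
have [[Htau1 Htau2] _] := Htau.
have [HtT1 HtT2] := HtT.1.
pose G (a b : B) : restr phi QT := qT (ttT (tau a 1) (tau b 1)).
have HG : bilin G.
  split=> [a|b] r u v; rewrite /G.
  - rewrite Htau2 (lin_restr (HtT1 _)) (lin_restr HqT) //.
  - rewrite Htau2 (lin_restr (HtT2 _)) (lin_restr HqT) //.
have [g [Hg HgE]] := tp_ex Ht HG.
have Hm : forall a b, (tau (mulB a b) 1 : T) = mulT (tau a 1) (tau b 1).
  by move=> a b; rewrite HmulT mulr1.
have Hgk : forall y, qB y = 0 -> g y = 0.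
  move=> y /Hqk; apply: span_lin => // z [a [b [c [->|->]]]];
    rewrite (linB Hg) !HgE /G !Hm -(linB HqT); apply/HqTk;
    apply: Defs.span_gen; exists (tau a 1), (tau b 1), (tau c 1); by [left|right].
have [y0 Hy0] := Hqs x0.
set e : QT := g y0.
have Hgb : forall a b, g (ttB a b) = (phi (beta a b) *: e : QT).
  move=> a b; rewrite -restr_scaleE -linZ //; apply/eqP; rewrite -subr_eq0 -linB //.
  apply/eqP/Hgk; rewrite linB // linZ // Hy0 -Hbetabar.
  by rewrite -Hu subrr.
have Hbe : betaSbar e = 1.
  have : forall y, (betaSbar (g y) : restr phi S^o) = phi (betabar (qB y)).
    apply: (tp_uniq Ht).
    - exact: (lin_comp Hg (lin_restr HbetaSbar_lin)).
    - exact: (lin_comp Hq (lin_comp Hbetabar_lin (lin_phi phi))).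
    by move=> a b; rewrite HgE /G HbetaSbar HbetaS Hbetabar !mulr1.
  by move=> /(_ y0); rewrite /e => ->; rewrite Hy0 bx0 rmorph1.
have Hz : forall z, qT z = betaSbar (qT z) *: e.
  apply: (tp_uniq HtT) => //.
    exact: (lin_scal e (lin_comp HqT HbetaSbar_lin)).
  move=> x y; rewrite HbetaSbar.
  pose h1 (x : restr phi T) : restr phi QT := qT (ttT x y).
  pose h2 (x : restr phi T) : restr phi QT := betaS x y *: e.
  have L1 : linear h1 by apply: lin_restr; apply: lin_comp => //; apply: HtT2.
  have L2 : linear h2 by apply: lin_restr; apply: lin_scal; apply: HbetaS_bil.2.
  apply: (tp_uniq Htau L1 L2) => a s; rewrite /h1 /h2; clear h1 h2 L1 L2.
  pose k1 (y : restr phi T) : restr phi QT := qT (ttT (tau a s) y).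
  pose k2 (y : restr phi T) : restr phi QT := betaS (tau a s) y *: e.
  have M1 : linear k1 by apply: lin_restr; apply: lin_comp => //; apply: HtT1.
  have M2 : linear k2 by apply: lin_restr; apply: lin_scal; apply: HbetaS_bil.1.
  move: y; apply: (tp_uniq Htau M1 M2) => b s'; rewrite /k1 /k2 HbetaS.
  rewrite -[s]mulr1 -[s']mulr1 -!HtauS.
  rewrite (linZ (HtT2 _)) (linZ (HtT1 _)) !(linZ HqT).
  have := HgE a b; rewrite /G => <-; rewrite Hgb !scalerA !mulr1.
  by have -> : s * s' * phi (beta a b) = phi (beta a b) * s * s' by rewrite mulrC mulrA.
exists (fun s : S^o => s *: e).
- by move=> z /=; have [w <-] := HqTs z; rewrite -Hz.
- by move=> s /=; rewrite linZ // Hbe scaleoE mulr1.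
Qed.


Lemma partA
  (R : comPzRingType) (B : lmodType R) (mulB : B -> B -> B)
  (beta : B -> B -> R^o)
  (S : comPzRingType) (phi : {rmorphism R -> S})
  (TTB : lmodType R) (ttB : B -> B -> TTB) (QB : lmodType R) (qB : TTB -> QB)
  (HQB : is_IBF_quot mulB ttB qB)
  (betabar : QB -> R^o) (Hbetabar_lin : linear betabar)
  (Hbetabar : forall a b, betabar (qB (ttB a b)) = beta a b)
  (T : lmodType S) (tau : B -> restr phi S^o -> restr phi T)
  (mulT : T -> T -> T)
  (betaS : T -> T -> S^o)
  (HbetaS : forall a (s : S) b (s' : S),
     betaS (tau a s) (tau b s') = phi (beta a b) * s * s')
  (TTT : lmodType S) (ttT : T -> T -> TTT) (QT : lmodType S) (qT : TTT -> QT)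
  (betaSbar : QT -> S^o) (HbetaSbar_lin : linear betaSbar)
  (HbetaSbar : forall x y, betaSbar (qT (ttT x y)) = betaS x y) :
  (forall (P : lmodType R) (pi : QB -> restr phi S^o -> P),
     is_tensor_product pi ->
   forall (betabar_S : P -> restr phi S^o), linear betabar_S ->
     (forall x (s : S), betabar_S (pi x s) = betabar x *: (s : restr phi S^o)) ->
   forall (nu : P -> restr phi QT), linear nu ->
     (forall b1 b2 (s : S), nu (pi (qB (ttB b1 b2)) s)
                           = s *: (qT (ttT (tau b1 1) (tau b2 1)) : QT)) ->
   forall p : P, (betabar_S p : S) = (betaSbar (nu p) : S)).
Proof.
move=> P pi Hpi bS HbS HbSE nu Hnu HnuE p.
have Hlin2 : linear (fun p => (betaSbar (nu p) : restr phi S^o)).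
  move=> a u v; rewrite Hnu.
  have := lin_restr HbetaSbar_lin; move=> L; exact: L.
apply: (tp_uniq Hpi HbS Hlin2) => x s.
have [Ht [Hq [Hqs _]]] := HQB.
have [y <-] := Hqs x.
have Hpil : linear (pi^~ s) := (Hpi.1).2 s.
apply: (tp_uniq Ht (V := restr phi S^o)
   (h1 := fun y => bS (pi (qB y) s)) (h2 := fun y => (betaSbar (nu (pi (qB y) s)) : restr phi S^o))).
- by move=> a u v /=; rewrite Hq Hpil HbS.
- by move=> a u v /=; rewrite Hq Hpil Hlin2.
move=> a b /=; rewrite HbSE HnuE Hbetabar linZ // HbetaSbar HbetaS.
by rewrite (restr_scaleE (beta a b) s) !scaleoE !mulr1 mulrC.
Qed.


End Aux.

Theorem lemma4p6
  (* R commutative ring, B an R-algebra (R-module with R-bilinear product) *)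
  (R : comPzRingType) (B : lmodType R) (mulB : B -> B -> B)
  (HmulB : bilin mulB)
  (* beta \in IBF_R(B) *)
  (beta : B -> B -> R^o) (Hbeta : is_IBF_form mulB beta)
  (* S commutative ring with structure map phi : R -> S *)
  (S : comPzRingType) (phi : {rmorphism R -> S})
  (* IBF_R(B) = (QB, qB) with (TTB, ttB) = B (x)_R B, and beta-bar *)
  (TTB : lmodType R) (ttB : B -> B -> TTB) (QB : lmodType R) (qB : TTB -> QB)
  (HQB : is_IBF_quot mulB ttB qB)
  (betabar : QB -> R^o) (Hbetabar_lin : linear betabar)
  (Hbetabar : forall a b, betabar (qB (ttB a b)) = beta a b)
  (* B (x)_R S = (T, tau), an S-module *)
  (T : lmodType S) (tau : B -> restr phi S^o -> restr phi T)
  (Htau : is_tensor_product tau)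
  (HtauS : forall (s : S) b (s' : S), s *: (tau b s' : T) = tau b (s * s'))
  (* its S-bilinear product *)
  (mulT : T -> T -> T) (HmulT_bil : bilin mulT)
  (HmulT : forall a (s : S) b (s' : S),
     mulT (tau a s) (tau b s') = tau (mulB a b) (s * s'))
  (* the base change beta_S *)
  (betaS : T -> T -> S^o) (HbetaS_bil : bilin betaS)
  (HbetaS : forall a (s : S) b (s' : S),
     betaS (tau a s) (tau b s') = phi (beta a b) * s * s')
  (* IBF_S(B (x)_R S) = (QT, qT) with (TTT, ttT) = T (x)_S T, and betaS-bar *)
  (TTT : lmodType S) (ttT : T -> T -> TTT) (QT : lmodType S) (qT : TTT -> QT)
  (HQT : is_IBF_quot mulT ttT qT)
  (betaSbar : QT -> S^o) (HbetaSbar_lin : linear betaSbar)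
  (HbetaSbar : forall x y, betaSbar (qT (ttT x y)) = betaS x y) :
  (* (a) *)
  (forall (P : lmodType R) (pi : QB -> restr phi S^o -> P),
     is_tensor_product pi ->
   forall (betabar_S : P -> restr phi S^o), linear betabar_S ->
     (forall x (s : S), betabar_S (pi x s) = betabar x *: (s : restr phi S^o)) ->
   forall (nu : P -> restr phi QT), linear nu ->
     (forall b1 b2 (s : S), nu (pi (qB (ttB b1 b2)) s)
                           = s *: (qT (ttT (tau b1 1) (tau b2 1)) : QT)) ->
   forall p : P, (betabar_S p : S) = (betaSbar (nu p) : S))
  /\
  (* (b) *)
  (fin_pres B -> flat (restr phi S^o) ->
     bijective betabar -> bijective betaSbar)
  /\
  (fin_pres B -> faithfully_flat (restr phi S^o) ->
     bijective betaSbar -> bijective betabar).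
Proof.
split.
  exact: (Aux.partA HQB Hbetabar_lin Hbetabar mulT HbetaS HbetaSbar_lin HbetaSbar).
split.
  move=> _ _ Hb.
  exact: (Aux.partB1 HQB Hbetabar_lin Hbetabar Htau HtauS HmulT HbetaS_bil HbetaS HQT
            HbetaSbar_lin HbetaSbar Hb).
move=> [n [pr [Hpr [Hprs [m [kk Hkk]]]]]] Hff Hbij.
by eapply Aux.partB2; eassumption.
Qed.
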